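(* For every $t\in(0,1)$ and every nonnegative integer $n$, $$\sum_{k\ge0} B^{n-k}_k(t) = \frac{1-(-t)^{n+1}}{1+t}.$$
   Context: The Bernstein polynomials are $B^m_k(t) = \binom{m}{k} t^k (1-t)^{m-k}$ for integers $0\le k\le m$, and $B^m_k(t)=0$ for $m<k$. *)

(* Defs.v *)
From mathcomp Require Import all_boot all_order all_algebra.
Set Implicit Arguments. Unset Strict Implicit. Unset Printing Implicit Defensive.
Import Order.TTheory GRing.Theory Num.Theory.
Local Open Scope ring_scope.

Definition bernstein {R : ringType} (m k : nat) (t : R) : R :=
  if (k <= m)%N then ('C(m, k))%:R * t ^+ k * (1 - t) ^+ (m - k) else 0.

(* Main.v *)
Require Import Defs.
From mathcomp Require Import all_boot all_order all_algebra.
From mathcomp Require Import ring zify.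
Import Order.TTheory GRing.Theory Num.Theory.
Local Open Scope ring_scope.

Section S.
Variables (R : realFieldType) (t : R).
Notation b := (fun m k => @bernstein R m k t).

Lemma b_pascal m k : b m.+1 k.+1 = (1 - t) * b m k.+1 + t * b m k.
Proof.
rewrite /bernstein /=.
have [H|H|H] := ssrnat.ltngtP k m.
- rewrite ifT ?ifT ?ifT; try lia.
  rewrite binS natrD subSS.
  have -> : (m - k = (m - k.+1).+1)%N by lia.
  rewrite !exprS; ring.
- rewrite ifF ?ifF ?ifF; try lia. ring.
- rewrite -H ifT ?ifF ?ifT; try lia.
  rewrite subnn !binn !expr0 exprS subnn expr0; ring.
Qed.

Lemma b_0 m : b m.+1 0 = (1 - t) * b m 0.
Proof. by rewrite /bernstein /= !bin0 !subn0 exprS; ring. Qed.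

Lemma b_0k k : b 0 k.+1 = 0.
Proof. by rewrite /bernstein. Qed.

Definition S n := \sum_(k < n.+1) b (n - k)%N k.

Lemma S_rec n : S n.+2 = (1 - t) * S n.+1 + t * S n.
Proof.
rewrite /S big_ord_recl big_ord_recr /= subn0 b_0.
rewrite [in X in _ = (1 - t) * X + _]big_ord_recl /= subn0.
rewrite subnn b_0k addr0.
have E : forall j : 'I_n.+1, b (n.+2 - bump 0 j)%N (bump 0 j)
   = (1 - t) * b (n.+1 - bump 0 j)%N (bump 0 j) + t * b (n - j)%N j.
  move=> j; rewrite /bump /= !add1n subSS.
  have -> : (n.+1 - j = (n - j).+1)%N by rewrite subSn // -ltnS.
  by rewrite b_pascal.
rewrite (eq_bigr _ (fun j _ => E j)) big_split /= -!mulr_sumr.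
rewrite /bump /=; ring.
Qed.

Lemma S_val n : S n * (1 + t) = 1 - (- t) ^+ n.+1.
Proof.
have H : forall n, S n * (1 + t) = 1 - (- t) ^+ n.+1 /\ S n.+1 * (1 + t) = 1 - (- t) ^+ n.+2.
  elim=> [|m [IH1 IH2]].
    rewrite /S !big_ord_recr !big_ord0 /= /bernstein /=.
    split; rewrite ?expr1 ?exprS ?expr1 ?expr0 /= ?subn0 ?subnn ?bin0; ring.
  split=> //.
  rewrite S_rec mulrDl -!mulrA IH1 IH2 !exprS; ring.
by case: (H n).
Qed.
End S.

Theorem mainTheorem18 (R : realFieldType) (t : R) (n : nat) :
  0 < t -> t < 1 ->
  \sum_(0 <= k < n.+1) bernstein (n - k) k t = (1 - (- t) ^+ n.+1) / (1 + t).
Proof.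
move=> t0 t1.
have nz : 1 + t != 0 by rewrite gt_eqF // ltr_wpDl // ?ler01.
rewrite big_mkord -(@S_val R t n) mulfK //.
Qed.
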